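(* In the projective model structure on $\mathbf{Gpd}^{\mathbf{G}}$, trivial cofibrations are stable under pullback along any fibration: if $g:A\to B$ is a projective fibration and $f:C\to B$ is a projective trivial cofibration, then the pullback $g^*f: A\times_B C\to A$ is a projective trivial cofibration.
   Context: $\mathbf{Gpd}^{\mathbf{G}}$ is the category of groupoids equipped with an involution and functors commuting with the involutions (the functor category $[\mathbf{B}(\mathbb{Z}/2\mathbb{Z})^{op},\mathbf{Gpd}]$). Its projective model structure: weak equivalences are the morphisms whose underlying functor is an equivalence of groupoids, fibrations are the morphisms whose underlying functor is an isofibration of groupoids, cofibrations are the morphisms with the left lifting property with respect to trivial fibrations. A trivial cofibration is a cofibration that is a weak equivalence. *)

(* Defs.v *)
(* Groupoids presented "internally": a type of objects, a type
   of all morphisms with source/target maps, identities, composition (only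
   constrained on composable pairs) and inverses. *)

Record Gpd := {
  ob : Type;
  mor : Type;
  src : mor -> ob;
  tgt : mor -> ob;
  idm : ob -> mor;
  comp : mor -> mor -> mor;   (* comp g f = g o f, meaningful when tgt f = src g *)
  inv : mor -> mor;
  src_idm : forall x, src (idm x) = x;
  tgt_idm : forall x, tgt (idm x) = x;
  src_comp : forall g f, tgt f = src g -> src (comp g f) = src f;
  tgt_comp : forall g f, tgt f = src g -> tgt (comp g f) = tgt g;
  comp_idl : forall f, comp (idm (tgt f)) f = f;
  comp_idr : forall f, comp f (idm (src f)) = f;
  comp_assoc : forall h g f, tgt f = src g -> tgt g = src h ->
      comp h (comp g f) = comp (comp h g) f;
  src_inv : forall f, src (inv f) = tgt f;
  tgt_inv : forall f, tgt (inv f) = src f;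
  inv_l : forall f, comp (inv f) f = idm (src f);
  inv_r : forall f, comp f (inv f) = idm (tgt f)
}.

Arguments src {g0} _.
Arguments tgt {g0} _.
Arguments idm {g0} _.
Arguments comp {g0} _ _.
Arguments inv {g0} _.

Record Functor (X Y : Gpd) := {
  fob : ob X -> ob Y;
  fmor : mor X -> mor Y;
  fsrc : forall f, src (fmor f) = fob (src f);
  ftgt : forall f, tgt (fmor f) = fob (tgt f);
  fidm : forall x, fmor (idm x) = idm (fob x);
  fcomp : forall g f, tgt f = src g -> fmor (comp g f) = comp (fmor g) (fmor f)
}.

Arguments fob {X Y} _ _.
Arguments fmor {X Y} _ _.

(* Equivalence of groupoids: a functor with a quasi-inverse and natural
   isomorphisms G F ~= id and F G ~= id (every morphism of a groupoid is iso). *)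
Definition is_equivalence {X Y : Gpd} (F : Functor X Y) : Prop :=
  exists (G : Functor Y X) (eta : ob X -> mor X) (eps : ob Y -> mor Y),
    (forall x, src (eta x) = x /\ tgt (eta x) = fob G (fob F x)) /\
    (forall f, comp (eta (tgt f)) f = comp (fmor G (fmor F f)) (eta (src f))) /\
    (forall y, src (eps y) = fob F (fob G y) /\ tgt (eps y) = y) /\
    (forall f, comp (eps (tgt f)) (fmor F (fmor G f)) = comp f (eps (src f))).

Definition is_isofibration {X Y : Gpd} (F : Functor X Y) : Prop :=
  forall (x : ob X) (m : mor Y), src m = fob F x ->
    exists m' : mor X, src m' = x /\ fmor F m' = m.

(* Objects of Gpd^G: groupoids with a strict involution, i.e. functors
   B(Z/2)^op -> Gpd. *)
Record GGpd := {
  carrier :> Gpd;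
  sigma : Functor carrier carrier;
  sigma_invol_ob : forall x, fob sigma (fob sigma x) = x;
  sigma_invol_mor : forall f, fmor sigma (fmor sigma f) = f
}.

Record GHom (X Y : GGpd) := {
  gfun :> Functor X Y;
  gcomm_ob : forall x, fob gfun (fob (sigma X) x) = fob (sigma Y) (fob gfun x);
  gcomm_mor : forall f, fmor gfun (fmor (sigma X) f) = fmor (sigma Y) (fmor gfun f)
}.

Arguments gfun {X Y} _.

Definition square_commutes {A B X Y : GGpd}
  (i : GHom A B) (u : GHom A X) (p : GHom X Y) (v : GHom B Y) : Prop :=
  (forall a, fob p (fob u a) = fob v (fob i a)) /\
  (forall f, fmor p (fmor u f) = fmor v (fmor i f)).

Definition ghom_eq {X Y : GGpd} (F G : GHom X Y) : Prop :=
  (forall x, fob F x = fob G x) /\ (forall f, fmor F f = fmor G f).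

Definition comp_eq {A B X : GGpd} (h : GHom B X) (i : GHom A B) (u : GHom A X) : Prop :=
  (forall a, fob h (fob i a) = fob u a) /\ (forall f, fmor h (fmor i f) = fmor u f).

Definition weq {X Y : GGpd} (F : GHom X Y) : Prop := is_equivalence (gfun F).
Definition fibration {X Y : GGpd} (F : GHom X Y) : Prop := is_isofibration (gfun F).
Definition trivial_fibration {X Y : GGpd} (F : GHom X Y) : Prop :=
  fibration F /\ weq F.

Definition cofibration {A B : GGpd} (i : GHom A B) : Prop :=
  forall (X Y : GGpd) (p : GHom X Y), trivial_fibration p ->
  forall (u : GHom A X) (v : GHom B Y), square_commutes i u p v ->
  exists h : GHom B X, comp_eq h i u /\ comp_eq p h v.

Definition trivial_cofibration {A B : GGpd} (i : GHom A B) : Prop :=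
  cofibration i /\ weq i.

Definition is_pullback {A B C P : GGpd} (g : GHom A B) (f : GHom C B)
  (p1 : GHom P A) (p2 : GHom P C) : Prop :=
  square_commutes p1 p2 f g /\
  forall (X : GGpd) (q1 : GHom X A) (q2 : GHom X C),
    square_commutes q1 q2 f g ->
    exists h : GHom X P, comp_eq p1 h q1 /\ comp_eq p2 h q2 /\
      forall h' : GHom X P, comp_eq p1 h' q1 -> comp_eq p2 h' q2 -> ghom_eq h' h.

(* Main.v *)
Require Import Defs.
From Stdlib Require Import ClassicalEpsilon ProofIrrelevance.

Definition dec (P:Prop) : {P}+{~P} := excluded_middle_informative P.

Lemma sig_eq {T} {P : T -> Prop} (x y : sig P) : proj1_sig x = proj1_sig y -> x = y.
Proof. destruct x as [x px], y as [y py]; simpl; intros ->. f_equal. apply proof_irrelevance. Qed.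

Lemma Fsrc {X Y} (F : Functor X Y) f : src (fmor F f) = fob F (src f). Proof. apply fsrc. Qed.
Lemma Ftgt {X Y} (F : Functor X Y) f : tgt (fmor F f) = fob F (tgt f). Proof. apply ftgt. Qed.
Lemma Fidm {X Y} (F : Functor X Y) x : fmor F (idm x) = idm (fob F x). Proof. apply fidm. Qed.
Lemma Fcomp {X Y} (F : Functor X Y) g f : tgt f = src g -> fmor F (comp g f) = comp (fmor F g) (fmor F f).
Proof. apply fcomp. Qed.

Ltac stsimp := repeat (first [rewrite src_idm | rewrite tgt_idm | rewrite src_inv | rewrite tgt_inv
   | rewrite Fsrc | rewrite Ftgt
   | rewrite src_comp by stsolve | rewrite tgt_comp by stsolve])
with stsolve := stsimp; first [reflexivity | assumption | congruence | (symmetry; assumption)].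

Section G.
Variable G : Gpd.
Implicit Types f g h : mor G.

Lemma inv_unique f g : tgt f = src g -> comp g f = idm (src f) -> g = inv f.
Proof.
  intros H1 H2.
  rewrite <- (comp_idr _ g). rewrite <- H1, <- (inv_r _ f).
  rewrite comp_assoc by stsolve. rewrite H2.
  rewrite <- (tgt_inv _ f). apply comp_idl.
Qed.

Lemma inv_inv f : inv (inv f) = f.
Proof. symmetry. apply inv_unique. stsolve. rewrite inv_r, src_inv. reflexivity. Qed.

Lemma cancel1 f g : tgt g = src f -> comp (inv f) (comp f g) = g.
Proof. intros H. rewrite comp_assoc by stsolve. rewrite inv_l, <- H. apply comp_idl. Qed.
Lemma cancel2 f g : tgt g = tgt f -> comp f (comp (inv f) g) = g.
Proof. intros H. rewrite comp_assoc by stsolve. rewrite inv_r, <- H. apply comp_idl. Qed.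
Lemma cancel3 f g : tgt f = src g -> comp (comp g f) (inv f) = g.
Proof. intros H. rewrite <- comp_assoc by stsolve. rewrite inv_r, H. apply comp_idr. Qed.
Lemma cancel4 f g : src f = src g -> comp (comp g (inv f)) f = g.
Proof. intros H. rewrite <- comp_assoc by stsolve. rewrite inv_l, H. apply comp_idr. Qed.
End G.

Lemma Finv {X Y} (F : Functor X Y) f : fmor F (inv f) = inv (fmor F f).
Proof.
  apply inv_unique. stsolve.
  rewrite <- Fcomp by stsolve. rewrite inv_l, Fidm, Fsrc. reflexivity.
Qed.

Definition faithful {X Y} (F : Functor X Y) := forall g1 g2, src g1 = src g2 -> tgt g1 = tgt g2 ->
  fmor F g1 = fmor F g2 -> g1 = g2.
Definition full {X Y} (F : Functor X Y) := forall x y (phi : mor Y), src phi = fob F x -> tgt phi = fob F y ->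
  exists g, src g = x /\ tgt g = y /\ fmor F g = phi.

Section Equiv.
Variables (X Y : Gpd) (F : Functor X Y) (G : Functor Y X) (eta : ob X -> mor X) (eps : ob Y -> mor Y).
Hypothesis Heta : forall x, src (eta x) = x /\ tgt (eta x) = fob G (fob F x).
Hypothesis Hetan : forall f, comp (eta (tgt f)) f = comp (fmor G (fmor F f)) (eta (src f)).
Hypothesis Heps : forall y, src (eps y) = fob F (fob G y) /\ tgt (eps y) = y.
Hypothesis Hepsn : forall f, comp (eps (tgt f)) (fmor F (fmor G f)) = comp f (eps (src f)).

Lemma eq_faithful : faithful F.
Proof.
  intros g1 g2 Hs Ht HF.
  rewrite <- (cancel1 _ (eta (tgt g1)) g1) by (destruct (Heta (tgt g1)); stsolve).
  rewrite <- (cancel1 _ (eta (tgt g2)) g2) by (destruct (Heta (tgt g2)); stsolve).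
  rewrite Hetan, Hetan, HF, Hs, Ht. reflexivity.
Qed.

Lemma eqG_faithful : faithful G.
Proof.
  intros g1 g2 Hs Ht HF.
  rewrite <- (cancel3 _ (eps (src g1)) g1) by (destruct (Heps (src g1)); stsolve).
  rewrite <- (cancel3 _ (eps (src g2)) g2) by (destruct (Heps (src g2)); stsolve).
  rewrite <- Hepsn, <- Hepsn, HF, Hs, Ht. reflexivity.
Qed.

Lemma eq_full : full F.
Proof.
  intros x y phi Hs Ht.
  destruct (Heta x) as [e1 e2], (Heta y) as [e3 e4].
  exists (comp (inv (eta y)) (comp (fmor G phi) (eta x))).
  assert (S : src (comp (inv (eta y)) (comp (fmor G phi) (eta x))) = x) by stsolve.
  assert (T : tgt (comp (inv (eta y)) (comp (fmor G phi) (eta x))) = y) by stsolve.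
  split; [exact S|split; [exact T|]].
  apply eqG_faithful; try (stsimp; congruence).
  pose proof (Hetan (comp (inv (eta y)) (comp (fmor G phi) (eta x)))) as N.
  rewrite S, T in N. rewrite cancel2 in N by stsolve.
  rewrite <- (cancel3 _ (eta x) (fmor G (fmor F _))) by stsolve.
  rewrite <- N. rewrite cancel3 by stsolve. reflexivity.
Qed.
End Equiv.

Lemma equiv_faithful {X Y} (F : Functor X Y) : is_equivalence F -> faithful F.
Proof. intros (G & eta & eps & A & B & C & D). eapply eq_faithful; eauto. Qed.
Lemma equiv_full {X Y} (F : Functor X Y) : is_equivalence F -> full F.
Proof. intros (G & eta & eps & A & B & C & D). eapply eq_full; eauto. Qed.

Section Lift.
Variables (B : Gpd) (O : Type) (pi : O -> ob B).
Definition Lmor := {t : O * O * mor B | src (snd t) = pi (fst (fst t)) /\ tgt (snd t) = pi (snd (fst t))}.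
Definition Ls (m : Lmor) := fst (fst (proj1_sig m)).
Definition Lt (m : Lmor) := snd (fst (proj1_sig m)).
Definition Lb (m : Lmor) := snd (proj1_sig m).
Lemma Lsrc m : src (Lb m) = pi (Ls m). Proof. exact (proj1 (proj2_sig m)). Qed.
Lemma Ltgt m : tgt (Lb m) = pi (Lt m). Proof. exact (proj2 (proj2_sig m)). Qed.

Definition Lmk (x y : O) (b : mor B) (H1 : src b = pi x) (H2 : tgt b = pi y) : Lmor :=
  exist _ (x, y, b) (conj H1 H2).

Lemma Lidm_p1 x : src (idm (pi x)) = pi x. Proof. apply src_idm. Qed.
Lemma Lidm_p2 x : tgt (idm (pi x)) = pi x. Proof. apply tgt_idm. Qed.
Definition Lidm x := Lmk x x (idm (pi x)) (Lidm_p1 x) (Lidm_p2 x).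
Lemma Linv_p1 m : src (inv (Lb m)) = pi (Lt m). Proof. rewrite src_inv. apply Ltgt. Qed.
Lemma Linv_p2 m : tgt (inv (Lb m)) = pi (Ls m). Proof. rewrite tgt_inv. apply Lsrc. Qed.
Definition Linv m := Lmk (Lt m) (Ls m) (inv (Lb m)) (Linv_p1 m) (Linv_p2 m).
Lemma Lcomp_p1 m2 m1 : Lt m1 = Ls m2 -> src (comp (Lb m2) (Lb m1)) = pi (Ls m1).
Proof. intros H. rewrite src_comp. apply Lsrc. rewrite Ltgt, Lsrc, H. reflexivity. Qed.
Lemma Lcomp_p2 m2 m1 : Lt m1 = Ls m2 -> tgt (comp (Lb m2) (Lb m1)) = pi (Lt m2).
Proof. intros H. rewrite tgt_comp. apply Ltgt. rewrite Ltgt, Lsrc, H. reflexivity. Qed.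
Definition Lcomp m2 m1 : Lmor :=
  match dec (Lt m1 = Ls m2) with
  | left H => Lmk (Ls m1) (Lt m2) (comp (Lb m2) (Lb m1)) (Lcomp_p1 m2 m1 H) (Lcomp_p2 m2 m1 H)
  | right _ => m1 end.
Lemma Lcomp_eq m2 m1 : Lt m1 = Ls m2 -> proj1_sig (Lcomp m2 m1) = (Ls m1, Lt m2, comp (Lb m2) (Lb m1)).
Proof. intros H. unfold Lcomp. destruct (dec _); [reflexivity|contradiction]. Qed.
Lemma Lcomp_s m2 m1 : Lt m1 = Ls m2 -> Ls (Lcomp m2 m1) = Ls m1.
Proof. intros H. unfold Ls. rewrite Lcomp_eq; auto. Qed.
Lemma Lcomp_t m2 m1 : Lt m1 = Ls m2 -> Lt (Lcomp m2 m1) = Lt m2.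
Proof. intros H. unfold Lt. rewrite Lcomp_eq; auto. Qed.
Lemma Lcomp_b m2 m1 : Lt m1 = Ls m2 -> Lb (Lcomp m2 m1) = comp (Lb m2) (Lb m1).
Proof. intros H. unfold Lb. rewrite Lcomp_eq; auto. Qed.

Lemma Lmor_eq (m1 m2 : Lmor) : Ls m1 = Ls m2 -> Lt m1 = Lt m2 -> Lb m1 = Lb m2 -> m1 = m2.
Proof.
  intros H1 H2 H3. apply sig_eq. destruct m1 as [[[a b] c] p], m2 as [[[a' b'] c'] p'].
  unfold Ls, Lt, Lb in *; simpl in *. congruence.
Qed.

Definition LG : Gpd.
Proof.
  refine (Build_Gpd O Lmor Ls Lt Lidm Lcomp Linv _ _ _ _ _ _ _ _ _ _ _).
  - reflexivity.
  - reflexivity.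
  - intros; apply Lcomp_s; auto.
  - intros; apply Lcomp_t; auto.
  - intros f. apply Lmor_eq; rewrite ?Lcomp_s, ?Lcomp_t, ?Lcomp_b; try reflexivity.
    unfold Lidm; simpl. unfold Lb at 1; simpl. rewrite <- Ltgt. apply comp_idl.
  - intros f. apply Lmor_eq; rewrite ?Lcomp_s, ?Lcomp_t, ?Lcomp_b; try reflexivity.
    unfold Lidm; simpl. unfold Lb at 2; simpl. rewrite <- Lsrc. apply comp_idr.
  - intros h g f H1 H2.
    apply Lmor_eq; rewrite ?Lcomp_s, ?Lcomp_t, ?Lcomp_b; rewrite ?Lcomp_s, ?Lcomp_t, ?Lcomp_b; auto.
    apply comp_assoc; rewrite ?Ltgt, ?Lsrc; congruence.
  - reflexivity.
  - reflexivity.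
  - intros f. apply Lmor_eq; rewrite ?Lcomp_s, ?Lcomp_t, ?Lcomp_b; try reflexivity.
    unfold Lidm, Linv, Lb; simpl. rewrite inv_l. fold (Lb f). rewrite Lsrc. reflexivity.
  - intros f. apply Lmor_eq; rewrite ?Lcomp_s, ?Lcomp_t, ?Lcomp_b; try reflexivity.
    unfold Lidm, Linv, Lb; simpl. rewrite inv_r. fold (Lb f). rewrite Ltgt. reflexivity.
Defined.

Definition Lproj : Functor LG B.
Proof.
  refine (Build_Functor LG B pi Lb _ _ _ _).
  - apply Lsrc.
  - apply Ltgt.
  - reflexivity.
  - intros g f H. apply Lcomp_b. exact H.
Defined.

Variable sec : ob B -> O.
Hypothesis Hsec : forall b, pi (sec b) = b.

Lemma Lproj_isofib : is_isofibration Lproj.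
Proof.
  intros x m H. simpl in H.
  assert (H2 : tgt m = pi (sec (tgt m))) by (rewrite Hsec; reflexivity).
  exists (Lmk x (sec (tgt m)) m H H2). split; reflexivity.
Qed.

Lemma Lproj_equiv : is_equivalence Lproj.
Proof.
  assert (A1 : forall m : mor B, src m = pi (sec (src m))) by (intros; rewrite Hsec; reflexivity).
  assert (A2 : forall m : mor B, tgt m = pi (sec (tgt m))) by (intros; rewrite Hsec; reflexivity).
  unshelve eexists (Build_Functor B LG sec (fun m => Lmk (sec (src m)) (sec (tgt m)) m (A1 m) (A2 m)) _ _ _ _).
  - reflexivity.
  - reflexivity.
  - intros x. apply Lmor_eq; simpl; unfold Ls, Lt, Lb; simpl; rewrite ?src_idm, ?tgt_idm, ?Hsec; reflexivity.
  - intros g f H. apply Lmor_eq; simpl; rewrite ?Lcomp_s, ?Lcomp_t, ?Lcomp_b; simpl; unfold Ls, Lt, Lb; simpl;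
      try reflexivity; try (rewrite ?src_comp, ?tgt_comp by auto; reflexivity); congruence.
  - assert (E1 : forall x, src (idm (pi x)) = pi x) by (intros; apply src_idm).
    assert (E2 : forall x, tgt (idm (pi x)) = pi (sec (pi x))) by (intros; rewrite tgt_idm, Hsec; reflexivity).
    exists (fun x => Lmk x (sec (pi x)) (idm (pi x)) (E1 x) (E2 x)).
    exists (fun b => idm b). simpl.
    split; [intros; split; reflexivity|].
    split; [|split; [intros; rewrite src_idm, tgt_idm, Hsec; split; reflexivity|]].
    + intros f. apply Lmor_eq; rewrite ?Lcomp_s, ?Lcomp_t, ?Lcomp_b; unfold Ls, Lt, Lb; simpl; try reflexivity;
        try (fold (Ls f); fold (Lt f); fold (Lb f); rewrite <- ?Lsrc, <- ?Ltgt; reflexivity).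
      fold (Ls f); fold (Lt f); fold (Lb f). rewrite <- ?Lsrc, <- ?Ltgt. rewrite comp_idl, comp_idr. reflexivity.
      all: unfold Ls, Lt; simpl; fold (Lb f); rewrite <- ?Lsrc, <- ?Ltgt; reflexivity.
    + intros f. rewrite comp_idr, comp_idl. simpl. reflexivity.
Qed.
End Lift.

Section LiftG.
Variables (B : GGpd) (O : Type) (pi : O -> ob B) (sO : O -> O).
Hypothesis HsO : forall x, sO (sO x) = x.
Hypothesis Hpi : forall x, pi (sO x) = fob (sigma B) (pi x).

Lemma Lsig_p1 (m : Lmor B O pi) : src (fmor (sigma B) (Lb _ _ _ m)) = pi (sO (Ls _ _ _ m)).
Proof. rewrite Fsrc, Lsrc, Hpi. reflexivity. Qed.
Lemma Lsig_p2 (m : Lmor B O pi) : tgt (fmor (sigma B) (Lb _ _ _ m)) = pi (sO (Lt _ _ _ m)).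
Proof. rewrite Ftgt, Ltgt, Hpi. reflexivity. Qed.
Definition Lsigm m := Lmk B O pi (sO (Ls _ _ _ m)) (sO (Lt _ _ _ m)) _ (Lsig_p1 m) (Lsig_p2 m).

Definition Lsig : Functor (LG B O pi) (LG B O pi).
Proof.
  refine (Build_Functor (LG B O pi) (LG B O pi) sO Lsigm _ _ _ _).
  - reflexivity.
  - reflexivity.
  - intros x. apply Lmor_eq; try reflexivity. unfold Lsigm, Lb; simpl. rewrite Fidm, Hpi. reflexivity.
  - intros g f H. simpl in H.
    assert (H' : Lt B O pi (Lsigm f) = Ls B O pi (Lsigm g)) by (unfold Lsigm, Lt, Ls; simpl; f_equal; exact H).
    simpl. apply Lmor_eq; rewrite ?Lcomp_s, ?Lcomp_t, ?Lcomp_b by assumption;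
      unfold Lsigm at 1; unfold Ls, Lt, Lb; simpl; fold (Ls B O pi (Lcomp B O pi g f));
      fold (Lt B O pi (Lcomp B O pi g f)); fold (Lb B O pi (Lcomp B O pi g f));
      rewrite ?Lcomp_s, ?Lcomp_t, ?Lcomp_b by assumption; try reflexivity.
    apply Fcomp. rewrite Ltgt, Lsrc. congruence.
Defined.

Definition LGG : GGpd.
Proof.
  refine (Build_GGpd (LG B O pi) Lsig _ _).
  - exact HsO.
  - intros f. apply Lmor_eq; simpl; unfold Lsigm, Ls, Lt, Lb; simpl; rewrite ?HsO; try reflexivity.
    apply sigma_invol_mor.
Defined.

Definition LprojG : GHom LGG B.
Proof.
  refine (Build_GHom LGG B (Lproj B O pi) _ _).
  - exact Hpi.
  - intros; reflexivity.
Defined.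
End LiftG.

Section XE.
Variables (C B : GGpd) (f : GHom C B).
Definition XO := (ob C + ob B * bool)%type.
Definition Xpi (x : XO) : ob B := match x with inl c => fob f c | inr (b, _) => b end.
Definition XsO (x : XO) : XO := match x with inl c => inl (fob (sigma C) c) | inr (b, bb) => inr (fob (sigma B) b, negb bb) end.
Lemma XsO_inv x : XsO (XsO x) = x.
Proof. destruct x as [c|[b bb]]; simpl; rewrite sigma_invol_ob; try rewrite Bool.negb_involutive; reflexivity. Qed.
Lemma Xpi_s x : Xpi (XsO x) = fob (sigma B) (Xpi x).
Proof. destruct x as [c|[b bb]]; simpl; try reflexivity. apply gcomm_ob. Qed.

Definition XE := LGG B XO Xpi XsO XsO_inv Xpi_s.
Definition pE := LprojG B XO Xpi XsO XsO_inv Xpi_s.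

Lemma pE_tf : trivial_fibration pE.
Proof.
  split.
  - apply (Lproj_isofib B XO Xpi (fun b => inr (b, true))). reflexivity.
  - apply (Lproj_equiv B XO Xpi (fun b => inr (b, true))). reflexivity.
Qed.

Lemma uE_p1 (g : mor C) : src (fmor f g) = Xpi (inl (src g)). Proof. apply Fsrc. Qed.
Lemma uE_p2 (g : mor C) : tgt (fmor f g) = Xpi (inl (tgt g)). Proof. apply Ftgt. Qed.
Definition uEm g : mor XE := Lmk B XO Xpi (inl (src g)) (inl (tgt g)) (fmor f g) (uE_p1 g) (uE_p2 g).

Definition uEF : Functor C XE.
Proof.
  refine (Build_Functor C XE (fun c => inl c) uEm _ _ _ _).
  - reflexivity.
  - reflexivity.
  - intros x. apply Lmor_eq; unfold uEm, Ls, Lt, Lb; simpl; rewrite ?src_idm, ?tgt_idm; try reflexivity. apply Fidm.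
  - intros g h H. apply Lmor_eq; simpl; rewrite ?Lcomp_s, ?Lcomp_t, ?Lcomp_b; unfold uEm, Ls, Lt, Lb; simpl;
      rewrite ?src_comp, ?tgt_comp by auto; try reflexivity; try (rewrite H; reflexivity).
    apply Fcomp; auto.
Defined.

Definition uE : GHom C XE.
Proof.
  refine (Build_GHom C XE uEF _ _).
  - intros; reflexivity.
  - intros g. apply Lmor_eq; simpl; unfold uEm, Lsigm, Ls, Lt, Lb; simpl; rewrite ?Fsrc, ?Ftgt; try reflexivity.
    apply gcomm_mor.
Defined.

Definition idG (X : GGpd) : GHom X X.
Proof.
  unshelve refine (Build_GHom X X (Build_Functor X X (fun x => x) (fun f => f) _ _ _ _) _ _); intros; reflexivity.
Defined.

Lemma extract : cofibration f -> exists E : ob B -> XO,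
  (forall c, E (fob f c) = inl c) /\ (forall b, E (fob (sigma B) b) = XsO (E b)) /\
  (forall b, Xpi (E b) = b).
Proof.
  intros Hc.
  destruct (Hc XE B pE pE_tf uE (idG B)) as [h [[H1 H2] [H3 H4]]].
  - split; intros; reflexivity.
  - exists (fob h). split; [|split].
    + intros c. apply H1.
    + intros b. exact (gcomm_ob _ _ h b).
    + intros b. apply H3.
Qed.
End XE.

Section PB.
Variables (A B C : GGpd) (g : GHom A B) (f : GHom C B).
Definition Pob := {ac : ob A * ob C | fob f (snd ac) = fob g (fst ac)}.
Definition Pmor := {m : mor A * mor C | fmor f (snd m) = fmor g (fst m)}.
Definition oa (w : Pob) := fst (proj1_sig w).
Definition oc (w : Pob) := snd (proj1_sig w).
Definition ma (m : Pmor) := fst (proj1_sig m).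
Definition mc (m : Pmor) := snd (proj1_sig m).
Lemma Pob_prop w : fob f (oc w) = fob g (oa w). Proof. exact (proj2_sig w). Qed.
Lemma Pmor_prop m : fmor f (mc m) = fmor g (ma m). Proof. exact (proj2_sig m). Qed.
Lemma Pob_eq w1 w2 : oa w1 = oa w2 -> oc w1 = oc w2 -> w1 = w2.
Proof. intros. apply sig_eq. destruct w1 as [[] ?], w2 as [[] ?]. unfold oa, oc in *; simpl in *; congruence. Qed.
Lemma Pmor_eq m1 m2 : ma m1 = ma m2 -> mc m1 = mc m2 -> m1 = m2.
Proof. intros. apply sig_eq. destruct m1 as [[] ?], m2 as [[] ?]. unfold ma, mc in *; simpl in *; congruence. Qed.

Definition Pomk a c (H : fob f c = fob g a) : Pob := exist _ (a, c) H.
Definition Pmmk al ga (H : fmor f ga = fmor g al) : Pmor := exist _ (al, ga) H.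

Lemma Psrc_p m : fob f (src (mc m)) = fob g (src (ma m)).
Proof. rewrite <- !Fsrc, Pmor_prop. reflexivity. Qed.
Lemma Ptgt_p m : fob f (tgt (mc m)) = fob g (tgt (ma m)).
Proof. rewrite <- !Ftgt, Pmor_prop. reflexivity. Qed.
Definition Psrc m := Pomk _ _ (Psrc_p m).
Definition Ptgt m := Pomk _ _ (Ptgt_p m).
Lemma Pidm_p w : fmor f (idm (oc w)) = fmor g (idm (oa w)).
Proof. rewrite !Fidm, Pob_prop. reflexivity. Qed.
Definition Pidm w := Pmmk _ _ (Pidm_p w).
Lemma Pinv_p m : fmor f (inv (mc m)) = fmor g (inv (ma m)).
Proof. rewrite !Finv, Pmor_prop. reflexivity. Qed.
Definition Pinv m := Pmmk _ _ (Pinv_p m).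
Definition composable (m2 m1 : Pmor) := tgt (ma m1) = src (ma m2) /\ tgt (mc m1) = src (mc m2).
Lemma Pcomp_p m2 m1 : composable m2 m1 -> fmor f (comp (mc m2) (mc m1)) = fmor g (comp (ma m2) (ma m1)).
Proof. intros [H1 H2]. rewrite !Fcomp by assumption. rewrite !Pmor_prop. reflexivity. Qed.
Definition Pcomp m2 m1 : Pmor :=
  match dec (composable m2 m1) with left H => Pmmk _ _ (Pcomp_p m2 m1 H) | right _ => m1 end.
Lemma Pcomp_a m2 m1 : composable m2 m1 -> ma (Pcomp m2 m1) = comp (ma m2) (ma m1).
Proof. intros H. unfold Pcomp. destruct (dec _); [reflexivity|contradiction]. Qed.
Lemma Pcomp_c m2 m1 : composable m2 m1 -> mc (Pcomp m2 m1) = comp (mc m2) (mc m1).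
Proof. intros H. unfold Pcomp. destruct (dec _); [reflexivity|contradiction]. Qed.
Lemma compo m2 m1 : Ptgt m1 = Psrc m2 -> composable m2 m1.
Proof. intros H. split; [apply (f_equal oa H)|apply (f_equal oc H)]. Qed.

Ltac pm := repeat first [ rewrite Pcomp_a by (apply compo; assumption) | rewrite Pcomp_c by (apply compo; assumption)].

Definition PG : Gpd.
Proof.
  refine (Build_Gpd Pob Pmor Psrc Ptgt Pidm Pcomp Pinv _ _ _ _ _ _ _ _ _ _ _).
  - intros; apply Pob_eq; simpl; unfold oa, oc, ma, mc; simpl; apply src_idm.
  - intros; apply Pob_eq; simpl; unfold oa, oc, ma, mc; simpl; apply tgt_idm.
  - intros h k H. apply compo in H. apply Pob_eq; unfold Psrc, Pomk, oa, oc; simpl;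
     [rewrite (Pcomp_a _ _ H) | rewrite (Pcomp_c _ _ H)]; apply src_comp, H.
  - intros h k H. apply compo in H. apply Pob_eq; unfold Ptgt, Pomk, oa, oc; simpl;
     [rewrite (Pcomp_a _ _ H) | rewrite (Pcomp_c _ _ H)]; apply tgt_comp, H.
  - intros m. assert (H : composable (Pidm (Ptgt m)) m) by (split; unfold ma, mc; simpl; rewrite src_idm; reflexivity).
    apply Pmor_eq; [rewrite (Pcomp_a _ _ H)|rewrite (Pcomp_c _ _ H)]; apply comp_idl.
  - intros m. assert (H : composable m (Pidm (Psrc m))) by (split; unfold ma, mc; simpl; apply tgt_idm).
    apply Pmor_eq; [rewrite (Pcomp_a _ _ H)|rewrite (Pcomp_c _ _ H)]; apply comp_idr.
  - intros h k m H1 H2. apply compo in H1, H2.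
    assert (H3 : composable h (Pcomp k m)).
    { destruct H1, H2. split; [rewrite Pcomp_a|rewrite Pcomp_c]; try split; auto; rewrite tgt_comp; auto. }
    assert (H4 : composable (Pcomp h k) m).
    { destruct H1, H2. split; [rewrite Pcomp_a|rewrite Pcomp_c]; try split; auto; rewrite src_comp; auto. }
    destruct H1, H2.
    apply Pmor_eq; rewrite ?Pcomp_a, ?Pcomp_c by (auto; split; auto); apply comp_assoc; auto.
  - intros; apply Pob_eq; unfold oa, oc; simpl; apply src_inv.
  - intros; apply Pob_eq; unfold oa, oc; simpl; apply tgt_inv.
  - intros m. assert (H : composable (Pinv m) m) by (split; unfold ma, mc; simpl; rewrite src_inv; reflexivity).
    apply Pmor_eq; [rewrite (Pcomp_a _ _ H)|rewrite (Pcomp_c _ _ H)]; apply inv_l.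
  - intros m. assert (H : composable m (Pinv m)) by (split; unfold ma, mc; simpl; rewrite tgt_inv; reflexivity).
    apply Pmor_eq; [rewrite (Pcomp_a _ _ H)|rewrite (Pcomp_c _ _ H)]; apply inv_r.
Defined.

Lemma Psig_op w : fob f (fob (sigma C) (oc w)) = fob g (fob (sigma A) (oa w)).
Proof. rewrite (gcomm_ob _ _ f), (gcomm_ob _ _ g), Pob_prop. reflexivity. Qed.
Lemma Psig_mp m : fmor f (fmor (sigma C) (mc m)) = fmor g (fmor (sigma A) (ma m)).
Proof. rewrite (gcomm_mor _ _ f), (gcomm_mor _ _ g), Pmor_prop. reflexivity. Qed.

Definition PsigF : Functor PG PG.
Proof.
  refine (Build_Functor PG PG (fun w => Pomk _ _ (Psig_op w)) (fun m => Pmmk _ _ (Psig_mp m)) _ _ _ _).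
  - intros m. apply Pob_eq; unfold oa, oc; simpl; apply Fsrc.
  - intros m. apply Pob_eq; unfold oa, oc; simpl; apply Ftgt.
  - intros w. apply Pmor_eq; unfold ma, mc; simpl; apply Fidm.
  - intros h k H. apply compo in H.
    assert (H' : composable (Pmmk _ _ (Psig_mp h)) (Pmmk _ _ (Psig_mp k))).
    { destruct H. split; unfold ma, mc; simpl; rewrite Fsrc, Ftgt; f_equal; auto. }
    destruct H as [Ha Hc].
    apply Pmor_eq; simpl; rewrite ?Pcomp_a, ?Pcomp_c by auto; unfold ma at 1, mc at 1; simpl;
      rewrite ?Pcomp_a, ?Pcomp_c by (split; auto); apply Fcomp; auto.
Defined.

Definition PGG : GGpd.
Proof.
  refine (Build_GGpd PG PsigF _ _).
  - intros w. apply Pob_eq; unfold oa, oc; simpl; apply sigma_invol_ob.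
  - intros m. apply Pmor_eq; unfold ma, mc; simpl; apply sigma_invol_mor.
Defined.

Definition pi1F : Functor PG A.
Proof.
  refine (Build_Functor PG A oa ma _ _ _ _); try reflexivity.
  intros h k H. apply compo in H. apply Pcomp_a; auto.
Defined.
Definition pi2F : Functor PG C.
Proof.
  refine (Build_Functor PG C oc mc _ _ _ _); try reflexivity.
  intros h k H. apply compo in H. apply Pcomp_c; auto.
Defined.
Definition pi1 : GHom PGG A.
Proof. refine (Build_GHom PGG A pi1F _ _); reflexivity. Defined.
Definition pi2 : GHom PGG C.
Proof. refine (Build_GHom PGG C pi2F _ _); reflexivity. Defined.

Lemma pi_square : square_commutes pi1 pi2 f g.
Proof. split; [apply Pob_prop | apply Pmor_prop]. Qed.
End PB.

Definition compG {X Y Z : GGpd} (h : GHom Y Z) (k : GHom X Y) : GHom X Z.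
Proof.
  unshelve refine (Build_GHom X Z (Build_Functor X Z (fun x => fob h (fob k x)) (fun m => fmor h (fmor k m)) _ _ _ _) _ _).
  - intros; rewrite !Fsrc; reflexivity.
  - intros; rewrite !Ftgt; reflexivity.
  - intros; rewrite !Fidm; reflexivity.
  - intros a b H; rewrite !Fcomp; try reflexivity; rewrite ?Fsrc, ?Ftgt; congruence.
  - intros; simpl; rewrite (gcomm_ob _ _ k), (gcomm_ob _ _ h); reflexivity.
  - intros; simpl; rewrite (gcomm_mor _ _ k), (gcomm_mor _ _ h); reflexivity.
Defined.

Section Iso.
Variables (A B C P : GGpd) (g : GHom A B) (f : GHom C B) (p1 : GHom P A) (p2 : GHom P C).
Hypothesis Hpb : is_pullback g f p1 p2.

Lemma kF_p z : fob f (fob p2 z) = fob g (fob p1 z). Proof. apply (proj1 (proj1 Hpb)). Qed.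
Lemma kF_mp m : fmor f (fmor p2 m) = fmor g (fmor p1 m). Proof. apply (proj2 (proj1 Hpb)). Qed.

Definition kG : GHom P (PGG A B C g f).
Proof.
  unshelve refine (Build_GHom P (PGG A B C g f)
    (Build_Functor P (PGG A B C g f) (fun z => Pomk A B C g f _ _ (kF_p z)) (fun m => Pmmk A B C g f _ _ (kF_mp m)) _ _ _ _) _ _).
  - intros; apply Pob_eq; unfold oa, oc; simpl; apply Fsrc.
  - intros; apply Pob_eq; unfold oa, oc; simpl; apply Ftgt.
  - intros; apply Pmor_eq; unfold ma, mc; simpl; apply Fidm.
  - intros a b H. assert (H' : composable A B C g f (Pmmk A B C g f _ _ (kF_mp a)) (Pmmk A B C g f _ _ (kF_mp b))).
    { split; unfold ma, mc; simpl; rewrite ?Fsrc, ?Ftgt; f_equal; exact H. }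
    apply Pmor_eq; simpl; rewrite ?Pcomp_a, ?Pcomp_c by exact H'; unfold ma, mc; simpl; apply Fcomp; exact H.
  - intros; apply Pob_eq; unfold oa, oc; simpl; apply gcomm_ob.
  - intros; apply Pmor_eq; unfold ma, mc; simpl; apply gcomm_mor.
Defined.

Lemma pb_iso : exists j : GHom (PGG A B C g f) P,
  (forall z, fob j (fob kG z) = z) /\ (forall m, fmor j (fmor kG m) = m) /\
  comp_eq p1 j (pi1 A B C g f) /\ comp_eq p2 j (pi2 A B C g f).
Proof.
  destruct Hpb as [Hsq U].
  destruct (U _ (pi1 A B C g f) (pi2 A B C g f) (pi_square A B C g f)) as [j [Hj1 [Hj2 _]]].
  destruct (U _ p1 p2 Hsq) as [h0 [_ [_ Hu]]].
  exists j.
  assert (E1 : ghom_eq (idG P) h0) by (apply Hu; split; intros; reflexivity).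
  assert (E2 : ghom_eq (compG j kG) h0).
  { apply Hu; split; intros; simpl; [apply Hj1|apply Hj1|apply Hj2|apply Hj2]. }
  destruct E1 as [E1o E1m], E2 as [E2o E2m].
  split; [|split; [|split; assumption]].
  - intros z. specialize (E1o z); specialize (E2o z). simpl in *. congruence.
  - intros m. specialize (E1m m); specialize (E2m m). simpl in *. congruence.
Qed.

Lemma transfer : weq (pi1 A B C g f) /\ cofibration (pi1 A B C g f) -> trivial_cofibration p1.
Proof.
  intros [[G [eta [eps [He1 [He2 [He3 He4]]]]]] Hc].
  destruct pb_iso as [j [Jo [Jm [[Q1o Q1m] _]]]].
  split.
  - unfold cofibration. intros X Y p Hp u v Hsq.
    destruct (Hc X Y p Hp (compG u j) v) as [h [[H1 H2] [H3 H4]]].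
    + split; intros; simpl.
      * rewrite (proj1 Hsq), Q1o. reflexivity.
      * rewrite (proj2 Hsq), Q1m. reflexivity.
    + exists h. split; [split|split]; auto.
      * intros z. pose proof (H1 (fob kG z)) as H. simpl in H. pose proof (Jo z) as E. simpl in E. rewrite E in H. exact H.
      * intros m. pose proof (H2 (fmor kG m)) as H. simpl in H. pose proof (Jm m) as E. simpl in E. rewrite E in H. exact H.
  - unfold weq, is_equivalence.
    set (G' := Build_Functor A P (fun a => fob j (fob G a)) (fun m => fmor j (fmor G m))
      (fun m => eq_trans (Fsrc j _) (f_equal _ (Fsrc G m)))
      (fun m => eq_trans (Ftgt j _) (f_equal _ (Ftgt G m)))
      (fun x => eq_trans (f_equal _ (Fidm G x)) (Fidm j _))
      (fun a b H => eq_trans (f_equal _ (Fcomp G a b H)) (Fcomp j _ _ (eq_trans (Ftgt G b) (eq_trans (f_equal _ H) (eq_sym (Fsrc G a))))))).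
    exists G', (fun z => fmor j (eta (fob kG z))), eps.
    split; [|split; [|split]].
    + intros z. destruct (He1 (fob kG z)) as [S T]. rewrite Fsrc, Ftgt, S, T, Jo. split; [reflexivity|].
      reflexivity.
    + intros m.
      assert (E : comp (fmor j (eta (fob kG (tgt m)))) m = comp (fmor j (eta (fob kG (tgt m)))) (fmor j (fmor kG m)))
        by (rewrite Jm; reflexivity).
      rewrite E. clear E.
      change (fmor G' (fmor p1 m)) with (fmor j (fmor G (fmor (pi1 A B C g f) (fmor kG m)))).
      rewrite <- (Ftgt kG), <- (Fsrc kG).
      rewrite <- !Fcomp.
      * f_equal. apply He2.
      * destruct (He1 (src (fmor kG m))) as [S T]. rewrite T, !Fsrc. reflexivity.
      * destruct (He1 (tgt (fmor kG m))) as [S T]. rewrite S. reflexivity.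
    + intros y. simpl. rewrite Q1o. apply He3.
    + intros m. simpl. rewrite Q1m. apply He4.
Qed.
End Iso.

Section W.
Variables (A B C : GGpd) (g : GHom A B) (f : GHom C B).
Hypothesis Hg : is_isofibration (gfun g).
Variables (Gf : Functor B C) (etaf : ob C -> mor C) (epsf : ob B -> mor B).
Hypothesis He1 : forall x, src (etaf x) = x /\ tgt (etaf x) = fob Gf (fob f x).
Hypothesis He2 : forall h, comp (etaf (tgt h)) h = comp (fmor Gf (fmor f h)) (etaf (src h)).
Hypothesis He3 : forall y, src (epsf y) = fob f (fob Gf y) /\ tgt (epsf y) = y.
Hypothesis He4 : forall h, comp (epsf (tgt h)) (fmor f (fmor Gf h)) = comp h (epsf (src h)).

Lemma fF : faithful f. Proof. eapply eq_faithful; eauto. Qed.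
Lemma fU : full f. Proof. eapply eq_full; eauto. Qed.

Lemma epsS y : src (epsf y) = fob f (fob Gf y). Proof. apply He3. Qed.
Lemma epsT y : tgt (epsf y) = y. Proof. apply He3. Qed.

Lemma Mex a : exists m, src m = a /\ fmor g m = inv (epsf (fob g a)).
Proof. apply Hg. rewrite src_inv, epsT. reflexivity. Qed.
Definition M a := proj1_sig (constructive_indefinite_description _ (Mex a)).
Lemma Msrc a : src (M a) = a. Proof. exact (proj1 (proj2_sig (constructive_indefinite_description _ (Mex a)))). Qed.
Lemma Mg a : fmor g (M a) = inv (epsf (fob g a)). Proof. exact (proj2 (proj2_sig (constructive_indefinite_description _ (Mex a)))). Qed.
Lemma Mtg a : fob g (tgt (M a)) = fob f (fob Gf (fob g a)).
Proof. rewrite <- Ftgt, Mg, tgt_inv, epsS. reflexivity. Qed.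

Ltac ss := repeat (first [rewrite src_idm | rewrite tgt_idm | rewrite src_inv | rewrite tgt_inv
   | rewrite Fsrc | rewrite Ftgt | rewrite Msrc | rewrite epsS | rewrite epsT
   | rewrite src_comp by sv | rewrite tgt_comp by sv])
with sv := ss; first [reflexivity | assumption | congruence | (symmetry; assumption)].

Definition PP := PGG A B C g f.

Definition Q0o a : ob PP := Pomk A B C g f (tgt (M a)) (fob Gf (fob g a)) (eq_sym (Mtg a)).

Definition Qa (al : mor A) := comp (M (tgt al)) (comp al (inv (M (src al)))).

Lemma fGg (h : mor B) : fmor f (fmor Gf h) = comp (inv (epsf (tgt h))) (comp h (epsf (src h))).
Proof. rewrite <- He4. rewrite cancel1 by sv. reflexivity. Qed.

Lemma Q0m_p al : fmor f (fmor Gf (fmor g al)) = fmor g (Qa al).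
Proof.
  unfold Qa. rewrite fGg. rewrite !Fcomp by sv. rewrite Finv, !Mg, inv_inv, Fsrc, Ftgt. reflexivity.
Qed.
Definition Q0m al : mor PP := Pmmk A B C g f (Qa al) (fmor Gf (fmor g al)) (Q0m_p al).

Lemma Qa_src al : src (Qa al) = tgt (M (src al)). Proof. unfold Qa. sv. Qed.
Lemma Qa_tgt al : tgt (Qa al) = tgt (M (tgt al)). Proof. unfold Qa. sv. Qed.

Definition Q0 : Functor A PP.
Proof.
  refine (Build_Functor A PP Q0o Q0m _ _ _ _).
  - intros al. apply Pob_eq; unfold oa, oc, ma, mc; simpl. apply Qa_src. exact (eq_trans (Fsrc Gf _) (f_equal _ (Fsrc g al))).
  - intros al. apply Pob_eq; unfold oa, oc, ma, mc; simpl. apply Qa_tgt. exact (eq_trans (Ftgt Gf _) (f_equal _ (Ftgt g al))).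
  - intros a. apply Pmor_eq; unfold ma, mc; simpl.
    + unfold Qa. rewrite src_idm, tgt_idm. rewrite <- (Msrc a) at 2. rewrite <- (tgt_inv _ (M a)).
      rewrite comp_idl, inv_r. reflexivity.
    + rewrite !Fidm. reflexivity.
  - intros a2 a1 H.
    assert (Hc : composable A B C g f (Q0m a2) (Q0m a1)).
    { split; unfold ma, mc; simpl. rewrite Qa_src, Qa_tgt, H. reflexivity. rewrite Fsrc, Ftgt, Fsrc, Ftgt, H. reflexivity. }
    apply Pmor_eq; simpl; rewrite ?Pcomp_a, ?Pcomp_c by exact Hc; unfold ma, mc; simpl.
    + unfold Qa. rewrite src_comp, tgt_comp by exact H.
      rewrite H. rewrite <- (comp_assoc _ a2) by sv.
      rewrite <- (comp_assoc _ (M (tgt a2)) (comp a2 (inv (M (src a2))))) by sv.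
      rewrite <- (comp_assoc _ a2 (inv (M (src a2)))) by sv.
      rewrite cancel1 by sv. reflexivity.
    + rewrite !Fcomp by sv. reflexivity.
Defined.

Lemma Gex (w : ob PP) : exists h, src h = oc A B C g f w /\ tgt h = fob Gf (fob g (oa A B C g f w)) /\
   fmor f h = inv (epsf (fob g (oa A B C g f w))).
Proof. apply fU. rewrite src_inv, epsT, Pob_prop. reflexivity. rewrite tgt_inv, epsS. reflexivity. Qed.
Definition Gam w := proj1_sig (constructive_indefinite_description _ (Gex w)).
Lemma GamP w : src (Gam w) = oc A B C g f w /\ tgt (Gam w) = fob Gf (fob g (oa A B C g f w)) /\
   fmor f (Gam w) = inv (epsf (fob g (oa A B C g f w))).
Proof. exact (proj2_sig (constructive_indefinite_description _ (Gex w))). Qed.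

Lemma eta0_p w : fmor f (Gam w) = fmor g (M (oa A B C g f w)).
Proof. rewrite Mg. apply GamP. Qed.
Definition eta0 (w : ob PP) : mor PP := Pmmk A B C g f (M (oa A B C g f w)) (Gam w) (eta0_p w).

Lemma weq_pi1 : weq (pi1 A B C g f).
Proof.
  exists Q0, eta0, (fun a => inv (M a)).
  split; [|split; [|split]].
  - intros w. destruct (GamP w) as [S [T _]]. split; apply Pob_eq; unfold oa, oc; simpl.
    + apply Msrc.
    + exact S.
    + reflexivity.
    + exact T.
  - intros z. destruct (GamP (tgt z)) as [S2 [T2 F2]]. destruct (GamP (src z)) as [S1 [T1 F1]].
    assert (Hc1 : composable A B C g f (eta0 (tgt z)) z).
    { split; unfold ma, mc; simpl. rewrite Msrc. reflexivity. symmetry; exact S2. }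
    assert (Hc2 : composable A B C g f (fmor Q0 (fmor (pi1 A B C g f) z)) (eta0 (src z))).
    { split; unfold ma, mc; simpl. rewrite Qa_src. reflexivity. rewrite !Fsrc; exact T1. }
    apply Pmor_eq; cbn [comp carrier PP PGG PG]; rewrite ?Pcomp_a, ?Pcomp_c by assumption.
    + change (comp (M (tgt (ma A B C g f z))) (ma A B C g f z) = comp (Qa (ma A B C g f z)) (M (src (ma A B C g f z)))).
      unfold Qa. rewrite (comp_assoc _ (M _)) by sv. rewrite cancel4 by sv. reflexivity.
    + change (comp (Gam (tgt z)) (mc A B C g f z) = comp (fmor Gf (fmor g (ma A B C g f z))) (Gam (src z))).
      assert (E1 : tgt (mc A B C g f z) = src (Gam (tgt z))) by (symmetry; exact S2).
      assert (E2 : tgt (Gam (src z)) = src (fmor Gf (fmor g (ma A B C g f z)))) by (rewrite !Fsrc; exact T1).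
      apply fF.
      * rewrite src_comp, src_comp, S1 by assumption. reflexivity.
      * rewrite tgt_comp, tgt_comp, T2, Ftgt, Ftgt by assumption. reflexivity.
      * rewrite !Fcomp by assumption. rewrite F2, F1, Pmor_prop, fGg, Fsrc, Ftgt.
        change (oa A B C g f (src z)) with (src (ma A B C g f z)).
        change (oa A B C g f (tgt z)) with (tgt (ma A B C g f z)).
        rewrite <- (comp_assoc _ (inv _)) by sv. rewrite cancel3 by sv. reflexivity.
  - intros a. rewrite src_inv, tgt_inv, Msrc. split; reflexivity.
  - intros al. change (comp (inv (M (tgt al))) (Qa al) = comp al (inv (M (src al)))). unfold Qa. rewrite cancel1 by sv. reflexivity.
Qed.
End W.

Section Cof.
Variables (A B C : GGpd) (g : GHom A B) (f : GHom C B).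
Variable E : ob B -> XO C B.
Hypothesis HE1 : forall c, E (fob f c) = inl c.
Hypothesis HE2 : forall b, E (fob (sigma B) b) = XsO C B (E b).
Hypothesis HE3 : forall b, Xpi C B f (E b) = b.

Lemma f_inj c1 c2 : fob f c1 = fob f c2 -> c1 = c2.
Proof. intros H. pose proof (HE1 c1) as E1. rewrite H, HE1 in E1. congruence. Qed.

Definition PQ := PGG A B C g f.

Lemma cof_pi1 : cofibration (pi1 A B C g f).
Proof.
  intros X Y p [Hpf Hpe] u v [Sq1 Sq2].
  pose proof (equiv_full _ Hpe) as Pfull. pose proof (equiv_faithful _ Hpe) as Pfaith.
  assert (Psurj : forall y, exists x, fob p x = y).
  { intros y. destruct Hpe as (Gp & etap & epsp & _ & _ & He3 & _).
    destruct (Hpf (fob Gp y) (epsp y)) as [m [Hm1 Hm2]]. apply He3.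
    exists (tgt m). rewrite <- Ftgt, Hm2. apply He3. }
  set (s := fun y => proj1_sig (constructive_indefinite_description _ (Psurj y))).
  assert (Hs : forall y, fob p (s y) = y) by (intros; exact (proj2_sig (constructive_indefinite_description _ (Psurj y)))).
  set (hob := fun a : ob A =>
    match dec (exists c, fob f c = fob g a) with
    | left H => let c := proj1_sig (constructive_indefinite_description _ H) in
                fob u (Pomk A B C g f a c (proj2_sig (constructive_indefinite_description _ H)))
    | right _ => match E (fob g a) with
                 | inr (_, false) => fob (sigma X) (s (fob v (fob (sigma A) a)))
                 | _ => s (fob v a) end
    end).
  assert (hob_in : forall w : ob PQ, hob (oa A B C g f w) = fob u w).
  { intros w. unfold hob. destruct (dec _) as [H|H].
    - f_equal. apply Pob_eq; [reflexivity|]. unfold oc at 1; simpl. apply f_inj.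
      rewrite (proj2_sig (constructive_indefinite_description _ H)). symmetry. apply Pob_prop.
    - exfalso. apply H. exists (oc A B C g f w). apply Pob_prop. }
  assert (hob_p : forall a, fob p (hob a) = fob v a).
  { intros a. destruct (dec (exists c, fob f c = fob g a)) as [[c Hc]|H].
    - pose (w := Pomk A B C g f a c Hc). change a with (oa A B C g f w). rewrite hob_in. apply Sq1.
    - unfold hob. destruct (dec _) as [H'|H']; [contradiction|].
      destruct (E (fob g a)) as [c|[b []]].
      + apply Hs.
      + apply Hs.
      + rewrite (gcomm_ob _ _ p), Hs, <- (gcomm_ob _ _ v), sigma_invol_ob. reflexivity. }
  assert (hob_sig : forall a, hob (fob (sigma A) a) = fob (sigma X) (hob a)).
  { intros a. destruct (dec (exists c, fob f c = fob g a)) as [[c Hc]|H].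
    - pose (w := Pomk A B C g f a c Hc).
      change a with (oa A B C g f w). rewrite hob_in.
      change (fob (sigma A) (oa A B C g f w)) with (oa A B C g f (fob (sigma PQ) w)).
      rewrite hob_in. apply gcomm_ob.
    - assert (H2 : ~ exists c, fob f c = fob g (fob (sigma A) a)).
      { intros [c Hc]. apply H. exists (fob (sigma C) c).
        rewrite (gcomm_ob _ _ f), Hc, <- (gcomm_ob _ _ g), sigma_invol_ob. reflexivity. }
      unfold hob. destruct (dec _) as [H'|H']; [contradiction|]. destruct (dec _) as [H''|H'']; [contradiction|].
      rewrite (gcomm_ob _ _ g), HE2.
      destruct (E (fob g a)) as [c|[b bb]] eqn:Eq.
      + exfalso. apply H. exists c. pose proof (HE3 (fob g a)) as K. rewrite Eq in K. exact K.
      + destruct bb; simpl.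
        * rewrite sigma_invol_ob. reflexivity.
        * rewrite sigma_invol_mor || idtac. rewrite (sigma_invol_ob X). reflexivity. }
  assert (Hex : forall al : mor A, exists xi, src xi = hob (src al) /\ tgt xi = hob (tgt al) /\ fmor p xi = fmor v al).
  { intros al. apply Pfull. rewrite hob_p. apply Fsrc. rewrite hob_p. apply Ftgt. }
  set (hm := fun al => proj1_sig (constructive_indefinite_description _ (Hex al))).
  assert (Hhm : forall al, src (hm al) = hob (src al) /\ tgt (hm al) = hob (tgt al) /\ fmor p (hm al) = fmor v al)
    by (intros; exact (proj2_sig (constructive_indefinite_description _ (Hex al)))).
  unshelve eexists (Build_GHom A X (Build_Functor A X hob hm _ _ _ _) _ _).
  - intros; apply Hhm.
  - intros; apply Hhm.
  - intros a. destruct (Hhm (idm a)) as [S [T P]]. apply Pfaith.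
    + rewrite S, src_idm, src_idm. reflexivity.
    + rewrite T, tgt_idm, tgt_idm. reflexivity.
    + rewrite P, !Fidm, hob_p. reflexivity.
  - intros a2 a1 H. destruct (Hhm (comp a2 a1)) as [S [T P]].
    destruct (Hhm a1) as [S1 [T1 P1]], (Hhm a2) as [S2 [T2 P2]].
    assert (Hc : tgt (hm a1) = src (hm a2)) by (rewrite T1, S2, H; reflexivity).
    apply Pfaith.
    + rewrite S, src_comp, src_comp, S1 by assumption. reflexivity.
    + rewrite T, tgt_comp, tgt_comp, T2 by assumption. reflexivity.
    + rewrite P, !Fcomp, P1, P2 by assumption. reflexivity.
  - exact hob_sig.
  - intros al. simpl. destruct (Hhm (fmor (sigma A) al)) as [S [T P]]. destruct (Hhm al) as [S1 [T1 P1]].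
    apply Pfaith.
    + rewrite S, Fsrc, Fsrc, S1, hob_sig. reflexivity.
    + rewrite T, Ftgt, Ftgt, T1, hob_sig. reflexivity.
    + rewrite P, (gcomm_mor _ _ p), P1, (gcomm_mor _ _ v). reflexivity.
  - split; split.
    + exact hob_in.
    + intros z. simpl. destruct (Hhm (ma A B C g f z)) as [S [T P]]. apply Pfaith.
      * rewrite S, Fsrc. change (src (ma A B C g f z)) with (oa A B C g f (src z)). apply hob_in.
      * rewrite T, Ftgt. change (tgt (ma A B C g f z)) with (oa A B C g f (tgt z)). apply hob_in.
      * rewrite P, Sq2. reflexivity.
    + exact hob_p.
    + intros al. apply Hhm.
Qed.
End Cof.

Theorem lemma4p8 (A B C P : GGpd) (g : GHom A B) (f : GHom C B)
  (p1 : GHom P A) (p2 : GHom P C) :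
  fibration g -> trivial_cofibration f -> is_pullback g f p1 p2 ->
  trivial_cofibration p1.
Proof.
  intros Hg [Hfc Hfw] Hpb.
  destruct (extract C B f Hfc) as [E [HE1 [HE2 HE3]]].
  apply (transfer A B C P g f p1 p2 Hpb). split.
  - destruct Hfw as (Gf & etaf & epsf & He1 & He2 & He3 & He4).
    eapply weq_pi1; eauto.
  - exact (cof_pi1 A B C g f E HE1 HE2 HE3).
Qed.
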